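(* Let $r\ge1$ and let $a_{-r},\dots,a_0$ be coefficients with $a_{-r}\ne0$ and $|a_0|<1$. Then for every integer $\ell\ge0$ and every $z\in\overline{\mathcal U}$, $\det K_{0,r-1}(z)\neq 0$ and \[ \frac{\det K_{\ell,\ell+r-1}(z)}{\det K_{0,r-1}(z)}=(-1)^{\ell r}\left(\frac{a_{-r}}{a_0-z}\right)^{\ell}. \]
   Context: $\overline{\mathcal U}=\{z\in\mathbb C:|z|\ge1\}$. For $z\in\overline{\mathcal U}$, let $\kappa_1,\dots,\kappa_M$ be the distinct roots of the degree-$r$ equation $z\kappa^r=\sum_{k=-r}^0 a_k\kappa^{r+k}$ in $\kappa$, with multiplicities $\beta_1,\dots,\beta_M$, $\beta_1+\dots+\beta_M=r$. For integers $-r\le i\le j$, $K_{i,j}(z)\in\mathcal M_{j-i+1,r}(\mathbb C)$ is the matrix whose columns, indexed by pairs $(s,q)$ with $1\le s\le M$, $0\le q\le\beta_s-1$ and taken in some fixed order (the same for all $i,j$), are the vectors $(\ell'^{\,q}\kappa_s^{\ell'})_{\ell'=i,\dots,j}$, with the convention $0^0=1$. *)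

(* Defs.v *)
From HB Require Import structures.
From mathcomp Require Import all_boot all_order all_algebra.
From mathcomp Require Import reals.
From mathcomp.real_closed Require Import complex.
Set Implicit Arguments. Unset Strict Implicit. Unset Printing Implicit Defensive.
Import Order.TTheory GRing.Theory Num.Theory.
Local Open Scope ring_scope.

(* The polynomial in kappa whose roots are the kappa_s:
   z kappa^r - sum_{k=-r}^0 a_k kappa^{r+k}.
   Coefficients are given as a : int -> C, a k = a_k (only k = -r..0 used). *)
Definition recpoly (C : nzRingType) (r : nat) (a : int -> C) (z : C) : {poly C} :=
  z *: 'X^r - \sum_(k < r.+1) a (- (k%:Z)) *: 'X^(r - k).

(* Canonical list of column indices (kappa_s, q), 0 <= q < beta_s,
   given an enumeration ks of the distinct roots of p. *)
Definition canon_cols (C : fieldType) (p : {poly C}) (ks : seq C) : seq (C * nat) :=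
  flatten [seq [seq (k, q) | q <- iota 0 (mup k p)] | k <- ks].

(* K_{i, i+n-1}: rows indexed by l' = i, ..., i+n-1, columns by cols;
   entry l'^q * kappa^l'. (0^0 = 1 since x ^+ 0 = 1.) *)
Definition Kmat (C : unitRingType) (cols : seq (C * nat)) (i : int) (n : nat)
  : 'M[C]_(n, size cols) :=
  \matrix_(a < n, b < size cols)
    let c := nth (0, 0%N) cols b in
    ((i + a%:Z)%:~R) ^+ c.2 * c.1 ^ (i + a%:Z).

(* Main.v *)
Require Import Defs.
From HB Require Import structures.
From mathcomp Require Import all_boot all_order all_algebra.
From mathcomp Require Import reals.
From mathcomp.real_closed Require Import complex.
From mathcomp Require Import ring zify.
Set Implicit Arguments. Unset Strict Implicit. Unset Printing Implicit Defensive.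
Import Order.TTheory GRing.Theory Num.Theory.
Local Open Scope ring_scope.
Section Gen.
Variable F : numClosedFieldType.
Implicit Types (p f g h : {poly F}) (x : F).

Definition theta f := 'X * f^`().
Definition thetan q f := iter q theta f.
Definition phi (c : F * nat) f := (thetan c.2 f).[c.1].

Lemma thetaD f g : theta (f + g) = theta f + theta g.
Proof. by rewrite /theta derivD mulrDr. Qed.
Lemma thetaZ c f : theta (c *: f) = c *: theta f.
Proof. by rewrite /theta derivZ scalerAr. Qed.
Lemma thetanD q f g : thetan q (f + g) = thetan q f + thetan q g.
Proof. by elim: q => //= q IH; rewrite IH thetaD. Qed.
Lemma thetanZ q c f : thetan q (c *: f) = c *: thetan q f.
Proof. by elim: q => //= q IH; rewrite IH thetaZ. Qed.
Lemma thetaXn m : theta 'X^m = m%:R *: 'X^m.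
Proof.
rewrite /theta derivXn; case: m => [|m]; first by rewrite mulr0n mulr0 scale0r.
by rewrite mulrnAr -exprS /= scaler_nat.
Qed.
Lemma thetanXn q m : thetan q 'X^m = (m%:R ^+ q) *: 'X^m.
Proof.
elim: q => /= [|q IH]; first by rewrite expr0 scale1r.
by rewrite IH thetaZ thetaXn scalerA -exprSr.
Qed.

Lemma phiD c f g : phi c (f + g) = phi c f + phi c g.
Proof. by rewrite /phi thetanD hornerD. Qed.
Lemma phiZ c a f : phi c (a *: f) = a * phi c f.
Proof. by rewrite /phi thetanZ hornerZ. Qed.
Lemma phi0 c : phi c 0 = 0.
Proof. by rewrite -(scale0r (0 : {poly F})) phiZ mul0r. Qed.
Lemma phi_sum c n (w : 'I_n -> F) (P : 'I_n -> {poly F}) :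
  phi c (\sum_(i < n) w i *: P i) = \sum_(i < n) w i * phi c (P i).
Proof.
apply: (big_rec2 (fun y1 y2 => phi c y1 = y2)); first exact: phi0.
by move=> i y1 y2 _ H; rewrite phiD phiZ H.
Qed.
Lemma phiXn x q m : phi (x, q) 'X^m = m%:R ^+ q * x ^+ m.
Proof. by rewrite /phi /= thetanXn hornerZ hornerXn. Qed.

Lemma theta_factor x j m g : (j <= m)%N ->
  exists g', thetan j (('X - x%:P) ^+ m * g) = ('X - x%:P) ^+ (m - j) * g' /\
             g'.[x] = (m ^_ j)%:R * x ^+ j * g.[x].
Proof.
elim: j => [|j IH] hj.
  by exists g; split; rewrite ?subn0 // ffactn0 expr0 !mul1r.
have [g' [E Ex]] := IH (ltnW hj).
have Ek : (m - j = (m - j.+1).+1)%N by rewrite subnSK.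
rewrite Ek in E.
set k := (m - j.+1)%N in E Ek *.
exists ('X * (g' *+ k.+1 + ('X - x%:P) * g'^`())); split.
  rewrite /= E /theta derivM deriv_exp derivXsubC mul1r /= exprS.
  ring.
rewrite hornerM hornerX hornerD hornerMn hornerM hornerXsubC subrr mul0r addr0.
rewrite Ex ffactnSr -Ek natrM exprS.
rewrite -!mulrnAr; ring.
Qed.

Lemma phi_dvd p h x q : p != 0 -> (q < mup x p)%N -> phi (x, q) (p * h) = 0.
Proof.
move=> p0 hq; set b := mup x p in hq.
have : ('X - x%:P) ^+ b %| p by rewrite -mup_geq.
case/dvdpP => g Hg.
rewrite /phi /= Hg mulrAC mulrC.
have [g' [E _]] := @theta_factor x q b (g * h) (ltnW hq).
rewrite E hornerM horner_exp hornerXsubC subrr expr0n /=.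
by rewrite subn_eq0 leqNgt hq mul0r.
Qed.

Lemma phi_mup f x : f != 0 -> x != 0 -> phi (x, mup x f) f != 0.
Proof.
move=> f0 x0; set m := mup x f.
have : ('X - x%:P) ^+ m %| f by rewrite -mup_geq.
case/dvdpP => g Hg.
have gx : ~~ root g x.
  apply/negP => rg.
  have : (m.+1 <= mup x f)%N.
    by rewrite mup_geq // Hg exprS dvdp_mul // dvdp_XsubCl.
  by rewrite ltnn.
rewrite /phi /= Hg mulrC.
have [g' [E Ex]] := @theta_factor x m m g (leqnn m).
rewrite E subnn expr0 mul1r Ex ffactnn.
by rewrite !mulf_neq0 ?expf_neq0 // pnatr_eq0 -lt0n fact_gt0.
Qed.

Lemma sum_eq_mem (T : eqType) (ks : seq T) y : uniq ks ->
  (\sum_(k <- ks) (y == k) = (y \in ks))%N.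
Proof.
elim: ks => [|k ks IH] /=; first by rewrite big_nil.
case/andP => kn u; rewrite big_cons IH // in_cons.
by case: eqP => [->|]; rewrite ?(negPf kn).
Qed.

Lemma sum_count_mem_uniq (T : eqType) (ks s : seq T) : uniq ks ->
  (\sum_(k <- ks) count_mem k s = count (mem ks) s)%N.
Proof.
move=> uks; elim: s => [|y s IH] /=; first by rewrite big1.
by rewrite big_split /= IH sum_eq_mem.
Qed.

Lemma mup_closed f : f != 0 -> exists2 rs : seq F,
   (size rs = (size f).-1)%N & forall x, mup x f = count_mem x rs.
Proof.
move=> f0; have [rs Hrs] := closed_field_poly_normal f.
have l0 : lead_coef f != 0 by rewrite lead_coef_eq0.
exists rs.
  by rewrite {1}Hrs size_scale // size_prod_XsubC.
move=> x; by rewrite Hrs -mul_polyC mupMr ?mu_prod_XsubC // rootC.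
Qed.

Lemma det_companion n (hn : (0 < n)%N) (c : 'I_n -> F) :
  \det (\matrix_(i < n, j < n) if (i.+1 < n)%N then ((j : nat) == i.+1)%:R else c j)
  = (-1) ^+ n.-1 * c (Ordinal hn).
Proof.
case: n hn c => // n hn c /=.
rewrite (expand_det_col _ ord0) (bigD1 ord_max) //= big1 ?addr0; last first.
  move=> i ni; rewrite mxE.
  have -> : (i.+1 < n.+1)%N.
    have := ltn_ord i; rewrite ltnS leq_eqVlt; case/orP => // /eqP E.
    by case/eqP: ni; apply: val_inj.
  by rewrite /= mul0r.
rewrite mxE ltnn /cofactor /= addn0.
have -> : row' ord_max (col' ord0 (\matrix_(i < n.+1, j < n.+1)
     if (i.+1 < n.+1)%N then ((j : nat) == i.+1)%:R else c j)) = 1%:M.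
  apply/matrixP => i j; rewrite !mxE lift_max lift0 /= ltnS ltn_ord eqSS.
  by rewrite eq_sym.
rewrite det1 mulr1 mulrC; congr (_ * c _); exact: val_inj.
Qed.
End Gen.
Section Main.
Variable F : numClosedFieldType.

Lemma mem_canon (p : {poly F}) ks x q :
  ((x, q) \in canon_cols p ks) = (x \in ks) && (q < mup x p)%N.
Proof.
apply/flatten_mapP/andP => [[k kin /mapP [q' qin [-> ->]]]|[xin qlt]].
  by rewrite mem_iota add0n in qin; split.
by exists x => //; apply/mapP; exists q => //; rewrite mem_iota.
Qed.

Lemma size_canon (p : {poly F}) ks :
  size (canon_cols p ks) = (\sum_(k <- ks) mup k p)%N.
Proof.
rewrite /canon_cols size_flatten /shape -map_comp sumnE big_map.
by apply: eq_bigr => k _; rewrite /= size_map size_iota.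
Qed.

Lemma KmatE (cols : seq (F * nat)) (l : nat) n i b :
  Kmat cols l%:Z n i b = phi (nth (0, 0%N) cols b) 'X^(l + i).
Proof.
case E: (nth (0,0%N) cols b) => [x q].
by rewrite mxE E phiXn /= -PoszD.
Qed.

Lemma main_gen (r : nat) (a : int -> F) (z : F) (l : nat) (ks : seq F)
  (cols : seq (F * nat)) :
  a (- (r.+1%:Z)) != 0 -> z != a 0 -> uniq ks ->
  (forall x, root (recpoly r.+1 a z) x = (x \in ks)) ->
  perm_eq cols (canon_cols (recpoly r.+1 a z) ks) ->
  \det (Kmat cols 0 (size cols)) != 0 /\
  \det (Kmat cols l%:Z (size cols)) / \det (Kmat cols 0 (size cols))
    = (-1) ^+ (l * r.+1) * (a (- (r.+1%:Z)) / (a 0 - z)) ^+ l.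
Proof.
move=> ar0 za0 uks Hroot Hperm.
set p := recpoly r.+1 a z.
have pc j : p`_j = z * (j == r.+1)%:R
    - \sum_(k < r.+2) a (- (k%:Z)) * (j == (r.+1 - k)%N)%:R.
  rewrite /p /recpoly coefB coefZ coefXn coef_sum; congr (_ - _).
  by apply: eq_bigr => k _; rewrite coefZ coefXn.
have plead : p`_r.+1 = z - a 0.
  rewrite pc eqxx mulr1 big_ord_recl /= subn0 eqxx mulr1 oppr0 big1 ?addr0 //.
  move=> i _; rewrite (_ : (r.+1 == r.+1 - bump 0 i)%N = false) ?mulr0 //.
  by apply/negbTE; rewrite /bump /=; have := ltn_ord i; lia.
have p0 : p`_0 = - a (- (r.+1%:Z)).
  rewrite pc mulr0 sub0r big_ord_recr /= subnn eqxx mulr1 big1 ?add0r //.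
  move=> i _; rewrite (_ : (0 == r.+1 - i)%N = false) ?mulr0 //.
  by apply/negbTE; have := ltn_ord i; lia.
have psize : size p = r.+2.
  apply/eqP; rewrite eqn_leq; apply/andP; split.
    apply/leq_sizeP => j hj; rewrite pc.
    have -> : (j == r.+1) = false by apply/negbTE; lia.
    rewrite mulr0 sub0r big1 ?oppr0 // => k _.
    rewrite (_ : (j == r.+1 - k)%N = false) ?mulr0 //.
    by apply/negbTE; lia.
  rewrite ltnNge; apply/negP => /leq_sizeP /(_ r.+1 (leqnn _)).
  by rewrite plead => /eqP; rewrite subr_eq0 (negPf za0).
have p_neq0 : p != 0 by rewrite -size_poly_eq0 psize.
have kn0 : forall x, x \in ks -> x != 0.
  move=> x; rewrite -Hroot; apply: contraTneq => ->.
  by rewrite /root horner_coef0 p0 oppr_eq0.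
have [rs rsz rsm] := mup_closed p_neq0.
have sum_p : (\sum_(k <- ks) mup k p)%N = r.+1.
  rewrite (eq_bigr _ (fun k _ => rsm k)) sum_count_mem_uniq //.
  have : all (mem ks) rs.
    apply/allP => x xin; rewrite /= -Hroot.
    have : (0 < mup x p)%N by rewrite rsm -has_count has_pred1.
    by rewrite -XsubC_dvd // dvdp_XsubCl.
  by rewrite all_count => /eqP ->; rewrite rsz psize.
have Hn : size cols = r.+1 by rewrite (perm_size Hperm) size_canon sum_p.
have colsP : forall c, c \in cols -> c.1 \in ks /\ (c.2 < mup c.1 p)%N.
  by case=> x q; rewrite (perm_mem Hperm) mem_canon => /andP.
have colsC : forall x q, x \in ks -> (q < mup x p)%N -> (x, q) \in cols.
  by move=> x q xk hq; rewrite (perm_mem Hperm) mem_canon xk.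
set n := size cols in Hn *.
have K0E : forall i b, Kmat cols 0 n i b = phi (nth (0,0%N) cols b) 'X^i.
  by move=> i b; have := KmatE 0 i b; rewrite add0n.
have Hdet0 : \det (Kmat cols 0 n) != 0.
  apply/negP => /det0P [v v0 vK].
  pose f := \sum_(i < n) v 0 i *: ('X^i : {poly F}).
  have fc j : f`_j = \sum_(i < n) v 0 i * (j == i)%:R.
    by rewrite /f coef_sum; apply: eq_bigr => i _; rewrite coefZ coefXn.
  have f0 : f != 0.
    apply: contraNneq v0 => f0; apply/eqP/rowP => i; rewrite mxE.
    have := fc i; rewrite f0 coef0 (bigD1 i) //= eqxx mulr1 big1 ?addr0.
      by move=> ->.
    move=> j ji; rewrite (_ : ((i : nat) == j) = false) ?mulr0 //.
    by apply/negbTE; rewrite eq_sym.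
  have fs : (size f <= n)%N.
    apply/leq_sizeP => j hj; rewrite fc big1 // => i _.
    rewrite (_ : (j == i :> nat) = false) ?mulr0 //.
    by apply/negbTE; have := ltn_ord i; lia.
  have phiz : forall c, c \in cols -> phi c f = 0.
    move=> c cin.
    have ib : (index c cols < n)%N by rewrite index_mem.
    have E : (v *m Kmat cols 0 n) 0 (Ordinal ib) = phi c f.
      rewrite mxE /f phi_sum; apply: eq_bigr => j _.
      by rewrite K0E /= nth_index.
    by rewrite -E vK mxE.
  have [rsf rsfz rsfm] := mup_closed f0.
  have H1 : (r.+1 <= \sum_(k <- ks) mup k f)%N.
    rewrite -sum_p big_seq [X in (_ <= X)%N]big_seq; apply: leq_sum => k kin.
    rewrite leqNgt; apply/negP => lt.
    have := phi_mup f0 (kn0 k kin).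
    by rewrite phiz ?eqxx // colsC.
  move: H1; rewrite (eq_bigr _ (fun k _ => rsfm k)) sum_count_mem_uniq // => H.
  have := leq_trans H (count_size _ _); rewrite rsfz.
  by move: fs; rewrite Hn; case: (size f) => [|s] /=; lia.
pose lead := z - a 0.
have lead0 : lead != 0 by rewrite subr_eq0.
pose M : 'M[F]_n := \matrix_(i < n, j < n)
  if (i.+1 < n)%N then ((j : nat) == i.+1)%:R else - (p`_j / lead).
have Ep : p = \sum_(j < r.+2) p`_j *: 'X^j.
  by rewrite -poly_def -psize coefK.
have Kstep : forall l0 : nat, Kmat cols (l0.+1)%:Z n = M *m Kmat cols l0%:Z n.
  move=> l0; apply/matrixP => i b; rewrite KmatE mxE.
  rewrite (eq_bigr (fun j : 'I_n => M i j * phi (nth (0, 0%N) cols b) 'X^(l0 + j)));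
    last by move=> j _; rewrite KmatE.
  have cin : nth (0, 0%N) cols b \in cols by rewrite mem_nth.
  case: (nth (0, 0%N) cols b) cin => x q cin.
  case: (ltnP i.+1 n) => hi.
    rewrite (bigD1 (Ordinal hi)) //= big1 ?addr0.
      by rewrite mxE hi eqxx mul1r addSnnS.
    move=> j nj; rewrite mxE hi; case: eqP => [E|]; last by rewrite mul0r.
    by case/eqP: nj; apply: val_inj.
  rewrite (eq_bigr (fun j : 'I_n => - (p`_j / lead) * phi (x, q) 'X^(l0 + j)));
    last by move=> j _; rewrite mxE ltnNge hi.
  have Ei : (i : nat) = r.
    have h2 := ltn_ord i; move: (nat_of_ord i) hi h2 => k; rewrite Hn; lia.
  rewrite Ei.
  have Z := phi_dvd ('X^l0) p_neq0 (colsP _ cin).2.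
  rewrite /= {1}Ep mulr_suml in Z.
  rewrite (eq_bigr (fun j : 'I_r.+2 => p`_j *: 'X^(l0 + j))) in Z; last first.
    by move=> j _; rewrite -scalerAl -exprD addnC.
  rewrite phi_sum big_ord_recr /= plead in Z.
  move/eqP: Z; rewrite addr_eq0 => /eqP Z.
  have -> : \sum_(j < n) - (p`_j / lead) * phi (x, q) 'X^(l0 + j)
     = - (\sum_(j < r.+1) p`_j * phi (x, q) 'X^(l0 + j)) / lead.
    rewrite Hn mulNr mulr_suml -sumrN; apply: eq_bigr => j _.
    by rewrite mulrAC mulNr.
  rewrite Z opprK mulrAC divff // mul1r.
  by rewrite addSnnS.
have detK : forall l0 : nat,
    \det (Kmat cols l0%:Z n) = \det M ^+ l0 * \det (Kmat cols 0 n).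
  elim => [|l0 IH]; first by rewrite expr0 mul1r.
  by rewrite Kstep det_mulmx IH exprS mulrA.
have n0 : (0 < n)%N by rewrite Hn.
have detM : \det M = (-1) ^+ r * (a (- (r.+1%:Z)) / lead).
  rewrite /M (det_companion n0) /= p0 mulNr opprK Hn.
  by [].
split => //.
rewrite detK mulfK // detM.
have -> : (-1) ^+ r * (a (- (r.+1%:Z)) / lead)
    = (-1) ^+ r.+1 * (a (- (r.+1%:Z)) / (a 0 - z)).
  rewrite exprS mulN1r mulNr -mulrN; congr (_ * _).
  have h1 : z - a 0 != 0 by rewrite subr_eq0.
  have h2 : a 0 - z != 0 by rewrite subr_eq0 eq_sym.
  rewrite /lead; field; rewrite ?h1 ?h2 ?za0 //.
by rewrite exprMn -exprM mulnC.
Qed.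
End Main.

Theorem lemma3p4 (R : realType) (r : nat) (a : int -> R[i]) :
  (1 <= r)%N -> a (- (r%:Z)) != 0 -> `|a 0| < 1 ->
  forall (l : nat) (z : R[i]), 1 <= `|z| ->
  forall (ks : seq R[i]), uniq ks ->
    (forall x, root (recpoly r a z) x = (x \in ks)) ->
  forall (cols : seq (R[i] * nat)),
    perm_eq cols (canon_cols (recpoly r a z) ks) ->
    \det (Kmat cols 0 (size cols)) != 0 /\
    \det (Kmat cols l%:Z (size cols)) / \det (Kmat cols 0 (size cols))
      = (-1) ^+ (l * r) * (a (- (r%:Z)) / (a 0 - z)) ^+ l.
Proof.
case: r => [//|r] _ ar0 ha l z hz ks uks Hroot cols Hperm.
have za0 : z != a 0.
  apply/eqP => E; rewrite E in hz.
  by have := lt_le_trans ha hz; rewrite ltxx.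
exact: (main_gen l ar0 za0 uks Hroot Hperm).
Qed.
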